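(* Let $q$ be a prime power, $n$ a positive integer, $L(x)=\sum_{i=0}^{n-1}a_ix^{q^{2i}}$ with $a_i\in\mathbb F_{q^{2n}}$, and suppose $\sigma_L$ is $\lambda$-Hermitian for some $\lambda\in\mathbb F_{q^2}$. Let $r=n-\dim\ker L$, and for $c\in\mathbb F_{q^2}$ let $N_c$ be the number of $u\in\mathbb F_{q^{2n}}$ with $\mathrm{Tr}(uL(u^q))+c=0$. Then \[N_c=\begin{cases}q^{2n-1}+(-1)^r(q-1)q^{2n-r-1}&\text{if }c=0,\\ q^{2n-1}+(-1)^{r-1}q^{2n-r-1}&\text{if }c^{q-1}=\lambda,\\ 0&\text{otherwise.}\end{cases}\]
   Context: $\mathrm{Tr}$ is the trace $\mathbb F_{q^{2n}}\to\mathbb F_{q^2}$ and $\sigma_L(u,v)=\mathrm{Tr}(uL(v^q))$. For a sesquilinear form $\sigma$, $\sigma^*(u,v)=\sigma(v,u)^q$, and $\sigma$ is $\lambda$-Hermitian if $\sigma^*=\lambda\sigma$. $\ker L$ is the kernel of the induced $\mathbb F_{q^2}$-linear map on $\mathbb F_{q^{2n}}$, dimension over $\mathbb F_{q^2}$. *)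

(* Defs.v *)
From HB Require Import structures.
From mathcomp Require Import all_boot all_order all_algebra all_field.
Set Implicit Arguments. Unset Strict Implicit. Unset Printing Implicit Defensive.
Import GRing.Theory.
Local Open Scope ring_scope.

(* Setting: K = F_{q^2} (a finite field of order q^2), F = F_{q^{2n}} a field
   extension of K of dimension n over K. *)
Section Defs.
Variables (K : finFieldType) (F : fieldExtType K) (q n : nat).

(* Tr : F_{q^{2n}} -> F_{q^2}, x |-> sum_{i<n} x^{q^{2i}} (values lie in the
   image of K in F). *)
Definition Tr (x : F) : F := \sum_(i < n) x ^+ (q ^ (2 * i)).

Definition Lpoly (a : 'I_n -> F) (x : F) : F :=
  \sum_(i < n) a i * x ^+ (q ^ (2 * i)).

Definition sigmaL (a : 'I_n -> F) (u v : F) : F := Tr (u * Lpoly a (v ^+ q)).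

(* sigma^*(u,v) = sigma(v,u)^q ; sigma is lambda-Hermitian iff sigma^* = lambda sigma *)
Definition is_lambda_hermitian (a : 'I_n -> F) (lam : K) : Prop :=
  forall u v : F, (sigmaL a v u) ^+ q = lam%:A * sigmaL a u v.

Definition kerL (a : 'I_n -> F) : {vspace F} := lker (linfun (Lpoly a)).

Definition Ncount (a : 'I_n -> F) (c : K) : nat :=
  #|[pred u : finvect_type F | Tr (u * Lpoly a (u ^+ q)) + c%:A == 0]|.

End Defs.

(* Main.v *)
Require Import Defs.
From HB Require Import structures.
From mathcomp Require Import all_boot all_order all_algebra all_field.
From mathcomp Require Import zify ring.
Set Implicit Arguments. Unset Strict Implicit. Unset Printing Implicit Defensive.
Import GRing.Theory.
Local Open Scope ring_scope.

Section RootCount.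
Variable R : finFieldType.

Lemma card_rootsXn (n : nat) (c : R) : (0 < n)%N -> (#|[pred x : R | x ^+ n == c]| <= n)%N.
Proof.
move=> n0.
have p0 : ('X^n - c%:P : {poly R}) != 0 by rewrite -size_poly_eq0 size_XnsubC.
have := @max_poly_roots _ _ (enum [pred x : R | x ^+ n == c]) p0.
rewrite size_XnsubC // ltnS cardE; apply; last exact: enum_uniq.
apply/allP => x; rewrite mem_enum inE => /eqP hx.
by rewrite rootE !hornerE hx subrr.
Qed.

Lemma card_partition (T : finType) (A : {set T}) (f : T -> R) :
  #|A| = (\sum_(k : R) #|[set u in A | f u == k]|)%N.
Proof.
rewrite -sum1_card (partition_big f xpredT) //.
by apply: eq_bigr => k _; rewrite sum1dep_card.
Qed.

End RootCount.

Section Herm.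
Variables (K : finFieldType) (V : finLmodType K) (q : nat) (lam : K) (B : V -> V -> K).
Hypotheses (hq : (1 < q)%N) (hK : #|K| = (q ^ 2)%N)
  (hF : forall x y : K, (x + y) ^+ q = x ^+ q + y ^+ q)
  (hB1 : forall k u1 u2 v, B (k *: u1 + u2) v = k * B u1 v + B u2 v)
  (hB2 : forall k u v1 v2, B u (k *: v1 + v2) = k ^+ q * B u v1 + B u v2)
  (hH : forall u v, B v u ^+ q = lam * B u v).

Lemma frob2 (k : K) : k ^+ (q ^ 2) = k.
Proof. by rewrite -hK expf_card. Qed.

Lemma frob0 : (0 : K) ^+ q = 0.
Proof. by rewrite expr0n; case: q hq. Qed.

Lemma frobN (x : K) : (- x) ^+ q = - x ^+ q.
Proof. by apply/eqP; rewrite -addr_eq0 -hF addNr frob0. Qed.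

Lemma frobB (x y : K) : (x - y) ^+ q = x ^+ q - y ^+ q.
Proof. by rewrite hF frobN. Qed.

Lemma neg1q : (-1 : K) ^+ (q - 1) = 1.
Proof.
have := frobN 1; rewrite expr1n.
have hq1 : q = (q - 1).+1 by lia.
rewrite {1}hq1 exprS mulN1r => /oppr_inj.
done.
Qed.

Lemma B0l v : B 0 v = 0.
Proof.
have := hB1 1 0 0 v; rewrite scaler0 addr0 mul1r => h.
by move/(congr1 (fun z => z - B 0 v)): h; rewrite subrr addrK.
Qed.

Lemma B0r u : B u 0 = 0.
Proof.
have := hB2 1 u 0 0; rewrite scaler0 addr0 expr1n mul1r => h.
by move/(congr1 (fun z => z - B u 0)): h; rewrite subrr addrK.
Qed.

Lemma BDl u1 u2 v : B (u1 + u2) v = B u1 v + B u2 v.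
Proof. by have := hB1 1 u1 u2 v; rewrite scale1r mul1r. Qed.

Lemma BZl k u v : B (k *: u) v = k * B u v.
Proof. by have := hB1 k u 0 v; rewrite addr0 B0l addr0. Qed.

Lemma BNl u v : B (- u) v = - B u v.
Proof. by rewrite -scaleN1r BZl mulN1r. Qed.

Lemma BDr u v1 v2 : B u (v1 + v2) = B u v1 + B u v2.
Proof. by have := hB2 1 u v1 v2; rewrite scale1r expr1n mul1r. Qed.

Lemma BZr k u v : B u (k *: v) = k ^+ q * B u v.
Proof. by have := hB2 k u v 0; rewrite addr0 B0r addr0. Qed.

Lemma BNr u v : B u (- v) = - B u v.
Proof. by rewrite -scaleN1r BZr frobN expr1n mulN1r. Qed.

Lemma Bsym0 u v : B u v = 0 -> B v u = 0.
Proof.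
move=> h; have := hH u v; rewrite h mulr0 => /eqP; rewrite expf_eq0.
by case/andP => _ /eqP.
Qed.

Definition closedS (S : {set V}) :=
  (0 \in S) /\ forall k u v, u \in S -> v \in S -> k *: u + v \in S.
Definition Nc (S : {set V}) t := #|[set u in S | B u u == t]|.
Definition Rad (S : {set V}) := [set v in S | [forall u in S, B u v == 0]].

Lemma exists_nonfix : exists k : K, k ^+ q != k.
Proof.
case: (boolP [exists k : K, k ^+ q != k]) => [/existsP //| /existsPn hall]; exfalso.
have h1 : (#|[pred x : K | x ^+ (q-1) == 1%R]| <= q - 1)%N by apply: card_rootsXn; lia.
have sub : {subset predC1 (0 : K) <= [pred x : K | x ^+ (q-1) == 1%R]}.
  move=> x; rewrite !inE => x0.
  have := hall x; rewrite negbK => /eqP hx.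
  have hq1 : q = (q - 1).+1 by lia.
  have e : x ^+ (q - 1) * x = 1 * x by rewrite mul1r -exprSr -hq1.
  by rewrite (mulIf x0 e).
have hs : predC1 (0 : K) \subset [pred x : K | x ^+ (q-1) == 1%R] by apply/subsetP.
have := subset_leq_card hs; rewrite cardC1 hK => h2.
have : ((q ^ 2).-1 <= q - 1)%N by apply: leq_trans h2 h1.
rewrite expnS expn1; nia.
Qed.

Lemma polar S : closedS S -> (forall u, u \in S -> B u u = 0) ->
  forall u v, u \in S -> v \in S -> B u v = 0.
Proof.
move=> [S0 Sc] hQ u v uS vS.
have [k hk] := exists_nonfix.
have h1 : forall x y, x \in S -> y \in S -> B x y + B y x = 0.
  move=> x y xS yS.
  have xyS : x + y \in S by rewrite -[x]scale1r Sc.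
  have := hQ _ xyS; rewrite BDl !BDr (hQ x) // (hQ y) // add0r addr0.
  done.
have kuS : k *: u \in S by rewrite -[k *: u]addr0 Sc.
have e1 := h1 u v uS vS.
have e2 := h1 _ v kuS vS.
rewrite BZl BZr in e2.
have e3 : B v u = - B u v by apply/eqP; rewrite -addr_eq0 addrC e1.
rewrite e3 mulrN -mulrBl in e2.
move/eqP: e2; rewrite mulf_eq0 subr_eq0 => /orP[hk'|/eqP //].
by rewrite eq_sym hk' in hk.
Qed.


Section Decomp.
Variables (S : {set V}) (w : V).
Hypotheses (hS : closedS S) (wS : w \in S) (a0 : B w w != 0).
Local Notation a := (B w w).
Definition Wset := [set v in S | B v w == 0].

Lemma W_closed : closedS Wset.
Proof.
case: hS => S0 Sc; split; first by rewrite inE S0 B0l eqxx.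
move=> k u v; rewrite !inE => /andP[uS /eqP uw] /andP[vS /eqP vw].
by rewrite Sc // hB1 uw vw mulr0 addr0 eqxx.
Qed.

Lemma Bwv v : v \in Wset -> B w v = 0.
Proof. by rewrite inE => /andP[_ /eqP] /Bsym0. Qed.

Lemma decomp (P : pred V) :
  #|[set u in S | P u]| = (\sum_(k : K) #|[set v in Wset | P (k *: w + v)%R]|)%N.
Proof.
case: hS => S0 Sc.
rewrite (card_partition _ (fun u => B u w / a)).
apply: eq_bigr => k _.
rewrite -[in RHS](card_imset _ (@addrI V (k *: w))).
apply: eq_card => u; rewrite [in LHS]inE [in LHS]inE.
apply/idP/imsetP.
  case/andP => /andP[uS Pu] /eqP hk.
  exists (u - k *: w).
    rewrite !inE (addrC (k *: w)) subrK Pu andbT; apply/andP; split.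
      by rewrite addrC -scaleNr Sc.
    by rewrite -scaleNr addrC hB1 -hk mulNr divfK // addNr.
  by rewrite addrC subrK.
case=> v; rewrite !inE => /andP[/andP[vS /eqP vw] Pv] ->.
rewrite Sc // Pv /= hB1 vw addr0 mulfK //.
Qed.

Lemma quad k v : v \in Wset ->
  B (k *: w + v) (k *: w + v) = k ^+ q.+1 * a + B v v.
Proof.
move=> vW; have vw : B v w = 0 by move: vW; rewrite inE => /andP[_ /eqP].
by rewrite hB1 !hB2 vw (Bwv vW) !mulr0 !addr0 add0r exprS mulrA.
Qed.

Lemma Nc_decomp t :
  Nc S t = (\sum_(k : K) Nc Wset (t - k ^+ q.+1 * a)%R)%N.
Proof.
rewrite /Nc (decomp (fun u => B u u == t)).
apply: eq_bigr => k _; apply: eq_card => v; rewrite !inE.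
case: (boolP ((v \in S) && (B v w == 0))) => //= vW.
rewrite quad; last by rewrite inE.
apply/eqP/eqP => [<-|->]; first by rewrite addrC addKr.
by rewrite addrC subrK.
Qed.

Lemma card_SW : #|S| = (#|K| * #|Wset|)%N.
Proof.
have := decomp xpredT.
have -> : [set u in S | xpredT u] = S by apply/setP => u; rewrite !inE andbT.
move=> ->; rewrite -sum_nat_const; apply: eq_bigr => k _.
by apply: eq_card => v; rewrite !inE andbT.
Qed.

Lemma Rad_W : Rad Wset = Rad S.
Proof.
case: hS => S0 Sc.
apply/setP => v; rewrite !inE; apply/idP/idP.
  case/andP => /andP[vS /eqP vw] /forall_inP hv; rewrite vS /=.
  have wv : B w v = 0 by apply: Bsym0.
  apply/forall_inP => u uS.
  have uW : u - (B u w / a) *: w \in Wset.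
    rewrite !inE; apply/andP; split; first by rewrite addrC -scaleNr Sc.
    by rewrite -scaleNr addrC hB1 mulNr divfK // addNr.
  have := hv _ uW.
  by rewrite -scaleNr addrC hB1 wv mulr0 add0r.
case/andP => vS /forall_inP hv.
have wv : B w v = 0 by apply/eqP/hv.
rewrite vS /= (Bsym0 wv) eqxx /=.
apply/forall_inP => u; rewrite inE => /andP[uS _]; exact: hv.
Qed.

End Decomp.

Lemma frobN1 (k : K) : (k ^+ q.+1) ^+ q = k ^+ q.+1.
Proof.
rewrite -exprM.
have -> : (q.+1 * q = q ^ 2 + q)%N by rewrite expnS expn1; lia.
by rewrite exprD frob2 -exprS.
Qed.

Lemma unit_norm (k : K) : k != 0 -> (k ^+ q.+1) ^+ (q - 1) = 1.
Proof.
move=> k0; rewrite -exprM.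
have e : k ^+ (q.+1 * (q - 1)) * k = 1 * k.
  rewrite -exprSr mul1r.
  have -> : (q.+1 * (q - 1)).+1 = (q ^ 2)%N by rewrite expnS expn1; nia.
  exact: frob2.
exact: (mulIf k0 e).
Qed.

Lemma norm_fiber s : s ^+ (q - 1) = 1 -> #|[pred k : K | k ^+ q.+1 == s]| = q.+1.
Proof.
move=> hs.
pose T := [pred x : K | x ^+ (q - 1) == 1].
have hT : (#|T| <= q - 1)%N by apply: card_rootsXn; lia.
have hfib : forall x : K, (#|[pred k : K | k ^+ q.+1 == x]| <= q.+1)%N.
  by move=> x; apply: card_rootsXn.
have T0 : forall x, x \in T -> x != 0.
  move=> x; rewrite inE; apply: contraL => /eqP ->.
  have hq1 : (q - 1 = (q - 2).+1)%N by lia.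
  by rewrite hq1 expr0n /= eq_sym oner_eq0.
have hsum : (#|predC1 (0%R : K)| = \sum_(x in T) #|[pred k : K | k ^+ q.+1 == x]|)%N.
  rewrite -sum1_card (partition_big (fun k => k ^+ q.+1) T); last first.
    by move=> k; rewrite !inE => k0; rewrite unit_norm.
  apply: eq_bigr => x xT; rewrite sum1dep_card; apply: eq_card => k; rewrite !inE.
  case: (eqVneq k 0) => [->|//].
  by rewrite expr0n /= eq_sym (negbTE (T0 x xT)).
rewrite cardC1 hK in hsum.
apply/eqP; rewrite eqn_leq hfib /= leqNgt; apply/negP => hlt.
have sT : s \in T by rewrite inE hs.
rewrite (bigD1 s) //= in hsum.
have hrest : (\sum_(x | (x \in T) && (x != s)) #|[pred k : K | k ^+ q.+1 == x]|
    <= \sum_(x | (x \in T) && (x != s)) q.+1)%N.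
  by apply: leq_sum => x _; apply: hfib.
have hc := cardD1 s T.
rewrite sT in hc.
have hrest2 : (\sum_(x | (x \in T) && (x != s)) q.+1 <= #|[predD1 T & s]| * q.+1)%N.
  rewrite sum_nat_cond_const; apply: eq_leq; congr (_ * _)%N.
  by apply: eq_card => x; rewrite !inE andbC.
rewrite expnS expn1 in hsum.
move: hsum hrest hrest2 hc hT hlt.
set s1 := \sum_(x in T | x != s) #|[pred k | k ^+ q.+1 == x]|.
set s2 := \sum_(x in T | x != s) q.+1.
set c1 := #|[predD1 T & s]|. set c2 := #|T|. set c3 := #|[pred k | k ^+ q.+1 == s]|.
rewrite /= add1n => hsum hrest hrest2 hc hT hlt.
nia.
Qed.

Definition Gf (m d : nat) (t : K) : int :=
  if t == 0 then (q ^ (2 * m))%:Z + (-1) ^+ (m - d) * (q - 1)%:Z * (q ^ (2 * m - (m - d)))%:Z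
  else if t ^+ q == lam * t then (q ^ (2 * m))%:Z - (-1) ^+ (m - d) * (q ^ (2 * m - (m - d)))%:Z
  else 0.

Lemma sum_split (f : K -> int) (c : pred K) (Z A : int) :
  (forall k, f k = if c k then Z else A) ->
  \sum_k f k = Z * (#|c|)%:Z + A * (#|predC c|)%:Z.
Proof.
move=> hf; rewrite (bigID c) /=.
rewrite (eq_bigr (fun=> Z)); last by move=> k ck; rewrite hf ck.
rewrite [X in _ + X](eq_bigr (fun=> A)); last by move=> k ck; rewrite hf (negbTE ck).
rewrite !sumr_const !pmulrn !mulrzz.
by congr (_ * _ + _ * _); apply: congr1; apply: eq_card => k; rewrite !inE.
Qed.


Lemma base S m d : closedS S -> #|S| = ((q ^ 2) ^ m)%N -> #|Rad S| = ((q ^ 2) ^ d)%N ->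
  (forall u, u \in S -> B u u = 0) -> forall t, ((q * Nc S t)%N)%:Z = Gf m d t.
Proof.
move=> hS hc hd hQ t.
have hR : Rad S = S.
  apply/setP => v; rewrite inE; case vS: (v \in S) => //=.
  by apply/forall_inP => u uS; apply/eqP; apply: (polar hS hQ).
rewrite hR hc in hd.
have hdm : d = m.
  apply/esym; apply: (expnI _ hd); rewrite expnS expn1; nia.
subst d; rewrite /Gf subnn expr0 mul1r subn0.
have hN : Nc S t = if t == 0 then #|S| else 0%N.
  rewrite /Nc; case: eqP => [->|/eqP t0].
    by apply: eq_card => u; rewrite inE; case uS: (u \in S) => //=; rewrite hQ // eqxx.
  apply/eqP; rewrite cards_eq0; apply/eqP/setP => u; rewrite !inE.
  by case uS: (u \in S) => //=; rewrite hQ // eq_sym (negbTE t0).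
rewrite hN; case: eqP => _.
  rewrite hc -expnM PoszM -subzn; last by lia.
  ring.
by rewrite muln0; case: ifP => _; rewrite ?mul1r ?subrr.
Qed.


Section Step.
Variables (S : {set V}) (w : V) (m d : nat).
Hypotheses (hS : closedS S) (wS : w \in S) (a0 : B w w != 0) (hdm : (d <= m)%N)
  (hW : forall t, ((q * Nc (Wset S w) t)%N)%:Z = Gf m d t).
Local Notation a := (B w w).

Lemma step t : ((q * Nc S t)%N)%:Z = Gf m.+1 d t.
Proof.
have ha : a ^+ q = lam * a := hH w w.
have lam0 : lam != 0.
  apply: contraNneq a0 => l0; move: ha; rewrite l0 mul0r => /eqP.
  by rewrite expf_eq0 => /andP[_].
have hNa : forall k : K, (k ^+ q.+1 * a) ^+ q = lam * (k ^+ q.+1 * a).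
  by move=> k; rewrite exprMn frobN1 ha mulrCA.
rewrite (Nc_decomp hS wS a0) big_distrr /= -natz natr_sum.
rewrite (eq_bigr (fun k => Gf m d (t - k ^+ q.+1 * a))); last first.
  by move=> k _; rewrite natz hW.
set r' := (m - d)%N.
have e1 : (m.+1 - d = r'.+1)%N by rewrite /r'; lia.
have e2 : (2 * m.+1 - (m.+1 - d) = (2 * m - r').+1)%N by rewrite /r'; lia.
have e3 : (2 * m.+1 = 2 + 2 * m)%N by lia.
have hq1 : (q - 1)%:Z = q%:Z - 1 by rewrite -subzn //; lia.
have hcard : forall c : pred K, (#|predC c|)%:Z = (q * q)%:Z - (#|c|)%:Z.
  move=> c; have := cardC c; rewrite hK expnS expn1 => <-.
  by rewrite PoszD addrC addKr.
rewrite /Gf e2 e1 e3.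
case: eqP => [t0|/eqP t0].
  subst t.
  rewrite (@sum_split _ (pred1 0) (Gf m d 0)
     ((q ^ (2 * m))%:Z - (-1) ^+ r' * (q ^ (2 * m - r'))%:Z)); last first.
    move=> k; rewrite /Gf /= -/r'; case: (eqVneq k 0) => [->|k0].
      by rewrite expr0n mul0r subrr eqxx.
    have x0 : 0 - k ^+ q.+1 * a != 0.
      by rewrite sub0r oppr_eq0 mulf_neq0 // expf_neq0.
    rewrite (negbTE x0) sub0r frobN hNa mulrN eqxx //.
  rewrite hcard card1 /Gf eqxx -/r'.
  rewrite !expnD !PoszM exprS !expnS hq1.
  ring.
case: ifP => hlt.
  set s := t / a.
  have s0 : s != 0 by rewrite mulf_neq0 // invr_eq0.
  have sq : s ^+ q = s.
    rewrite /s exprMn exprVn ha (eqP hlt) invfM mulrACA mulfV // mul1r //.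
  have hs : s ^+ (q - 1) = 1.
    have hq' : q = (q - 1).+1 by lia.
    have e : s ^+ (q - 1) * s = 1 * s by rewrite mul1r -exprSr -hq'.
    exact: (mulIf s0 e).
  rewrite (@sum_split _ [pred k : K | k ^+ q.+1 == s] (Gf m d 0)
     ((q ^ (2 * m))%:Z - (-1) ^+ r' * (q ^ (2 * m - r'))%:Z)); last first.
    move=> k; rewrite /Gf /= -/r'.
    have ee : (t - k ^+ q.+1 * a == 0) = (k ^+ q.+1 == s).
      rewrite subr_eq0 /s; apply/eqP/eqP => [->|->]; first by rewrite mulfK.
      by rewrite divfK.
    rewrite ee; case: (k ^+ q.+1 == s); first by rewrite eqxx.
    by rewrite frobB hNa (eqP hlt) mulrBr eqxx.
  rewrite hcard norm_fiber // /Gf eqxx -/r'.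
  rewrite !expnD !PoszM exprS !expnS hq1.
  ring.
rewrite big1 // => k _.
rewrite /Gf.
have x0 : t - k ^+ q.+1 * a != 0.
  rewrite subr_eq0; apply/eqP => ht.
  by move: hlt; rewrite ht hNa eqxx.
rewrite (negbTE x0).
case: ifP => // hx.
move: hlt; rewrite -[t](subrK (k ^+ q.+1 * a)) hF (eqP hx) hNa -mulrDr eqxx.
done.
Qed.

End Step.


Lemma partA m : forall S d, closedS S -> #|S| = ((q ^ 2) ^ m)%N ->
  #|Rad S| = ((q ^ 2) ^ d)%N -> forall t, ((q * Nc S t)%N)%:Z = Gf m d t.
Proof.
elim: m => [|m IH] S d hS hc hd t;
  (case: (boolP [exists u in S, B u u != 0]) => [/exists_inP [w wS a0] | /exists_inPn hall];
   last by apply: (base hS hc hd) => u uS; apply/eqP; have := hall u uS; rewrite negbK).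
  have := card_SW hS wS a0; rewrite hc hK expn0.
  have : (0 < #|Wset S w|)%N.
    by apply/card_gt0P; exists 0; case: (W_closed w hS).
  move: (#|Wset S w|) => x; rewrite expnS expn1; nia.
have hWc := card_SW hS wS a0.
rewrite hc hK expnS in hWc.
have hW' : #|Wset S w| = ((q ^ 2) ^ m)%N.
  apply/eqP; rewrite -(@eqn_pmul2l (q ^ 2)); last by rewrite expn_gt0; lia.
  by rewrite hWc.
have hR := Rad_W hS wS a0.
have hdm : (d <= m)%N.
  have : Rad (Wset S w) \subset Wset S w.
    by apply/subsetP => v; rewrite inE => /andP[].
  move/subset_leq_card; rewrite hR hd hW' leq_exp2l //.
  rewrite expnS expn1; nia.
apply: (step hS wS a0 hdm) => t'.
apply: IH; [exact: W_closed | exact: hW' | by rewrite hR].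
Qed.

End Herm.

Section PartB.
Variables (p e q n : nat) (K : finFieldType) (F : fieldExtType K) (a : 'I_n -> F) (lam : K).
Hypotheses (hp : prime p) (he : (0 < e)%N) (hqe : q = (p ^ e)%N) (hK : #|K| = (q ^ 2)%N)
  (hn : (0 < n)%N) (hdim : \dim {:F} = n) (hH : is_lambda_hermitian q a lam).

Lemma q_gt1 : (1 < q)%N.
Proof. by rewrite hqe -(expn0 p) ltn_exp2l ?prime_gt1. Qed.

Lemma pcharK : p \in [pchar K].
Proof. by apply: (card_finPcharP (n := (e * 2)%N)) => //; rewrite hK hqe -expnM. Qed.

Lemma pcharF : p \in [pchar F].
Proof. by rewrite (pchar_lalg F) pcharK. Qed.

Lemma natq (R : nzRingType) (j : nat) : p \in [pchar R] -> ([pchar R]).-nat (q ^ j)%N.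
Proof.
move=> hR; rewrite (eq_pnat _ (pcharf_eq hR)) hqe -expnM pnatX pnat_id //.
Qed.

Lemma frobDK (x y : K) j : (x + y) ^+ (q ^ j) = x ^+ (q ^ j) + y ^+ (q ^ j).
Proof. exact: exprDn_pchar (natq j pcharK). Qed.

Lemma frobDF (x y : F) j : (x + y) ^+ (q ^ j) = x ^+ (q ^ j) + y ^+ (q ^ j).
Proof. exact: exprDn_pchar (natq j pcharF). Qed.

Lemma frobNF (x : F) j : (- x) ^+ (q ^ j) = - x ^+ (q ^ j).
Proof. exact: exprNn_pchar (natq j pcharF). Qed.

Lemma frob0F j : (0 : F) ^+ (q ^ j) = 0.
Proof. by rewrite expr0n expn_eq0; have := q_gt1; case: q. Qed.

Lemma frob_sum (I : finType) (f : I -> F) j :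
  (\sum_i f i) ^+ (q ^ j) = \sum_i (f i) ^+ (q ^ j).
Proof. exact: (big_morph (fun x : F => x ^+ (q ^ j)) (fun x y => frobDF x y j) (frob0F j)). Qed.

Lemma cardV : #|finvect_type F| = ((q ^ 2) ^ n)%N.
Proof.
have := card_vspace (fullv : {vspace finvect_type F}).
rewrite hK => h; rewrite -[RHS](_ : (q ^ 2) ^ \dim (fullv : {vspace F}) = _)%N; last by rewrite hdim.
rewrite -h; apply: eq_card => x; rewrite memvf; done.
Qed.

Lemma fixF (x : F) : x ^+ ((q ^ 2) ^ n) = x.
Proof. by rewrite -cardV (expf_card (x : finvect_type F)). Qed.

Lemma fixK (k : K) j : k ^+ ((q ^ 2) ^ j) = k.
Proof.
elim: j => [|j IH]; first by rewrite expr1.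
by rewrite expnSr exprM IH -hK expf_card.
Qed.

Lemma algX (k : K) j : (k%:A : F) ^+ j = (k ^+ j)%:A.
Proof. by rewrite -!in_algE rmorphXn. Qed.

Lemma inK (x : F) : x ^+ (q ^ 2) = x -> exists k : K, x = k%:A.
Proof.
move=> hx.
pose P := map_poly (in_alg F) ('X^#|K| - 'X).
have : root P x.
  by rewrite /P rmorphB /= map_polyXn map_polyX rootE !(hornerE, hornerXn) hK hx subrr.
have -> : P = \prod_(z <- [seq b%:A | b : K]) ('X - z%:P).
  rewrite /P finField_genPoly rmorph_prod big_image /=.
  by apply: eq_bigr => b _; rewrite rmorphB /= map_polyX map_polyC.
by rewrite root_prod_XsubC => /mapP[k _ ->]; exists k.
Qed.

Lemma Tr_fix (x : F) : Tr q n x ^+ (q ^ 2) = Tr q n x.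
Proof.
rewrite /Tr frob_sum.
have e1 : forall i : nat, (x ^+ (q ^ (2 * i))) ^+ (q ^ 2) = x ^+ (q ^ (2 * i.+1)).
  by move=> i; rewrite -exprM -expnD; congr (_ ^+ (_ ^ _)); lia.
rewrite (eq_bigr (fun i : 'I_n => x ^+ (q ^ (2 * i.+1)))); last by move=> i _; rewrite e1.
have hx := fixF x; rewrite -expnM in hx.
move: hx; case: n hn => [//|n'] _ hx.
rewrite big_ord_recr big_ord_recl /= addrC; congr (_ + _).
  by rewrite hx muln0 expn0 expr1.
Qed.

Lemma fixKq (k : K) i : k ^+ (q ^ (2 * i)) = k.
Proof. by rewrite expnM fixK. Qed.

Lemma Tr_add (x y : F) : Tr q n (x + y) = Tr q n x + Tr q n y.
Proof. by rewrite /Tr -big_split; apply: eq_bigr => i _; rewrite frobDF. Qed.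

Lemma Tr_scal (k : K) (x : F) : Tr q n (k%:A * x) = k%:A * Tr q n x.
Proof.
rewrite /Tr mulr_sumr; apply: eq_bigr => i _.
by rewrite exprMn algX fixKq.
Qed.

Lemma L_add (x y : F) : Lpoly q a (x + y) = Lpoly q a x + Lpoly q a y.
Proof. by rewrite /Lpoly -big_split; apply: eq_bigr => i _; rewrite frobDF mulrDr. Qed.

Lemma L_scal (k : K) (x : F) : Lpoly q a (k%:A * x) = k%:A * Lpoly q a x.
Proof.
rewrite /Lpoly mulr_sumr; apply: eq_bigr => i _.
by rewrite exprMn algX fixKq mulrCA.
Qed.

Definition Bf (u v : F) : K := odflt 0 [pick k : K | k%:A == sigmaL q a u v].

Lemma BfE u v : (Bf u v)%:A = sigmaL q a u v.
Proof.
have [k hk] := inK (Tr_fix (u * Lpoly q a (v ^+ q))).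
rewrite /Bf; case: pickP => [k' /eqP //| /(_ k)].
by rewrite /sigmaL hk eqxx.
Qed.

Lemma alg_inj : injective (fun k : K => (k%:A : F)).
Proof. by move=> x y; rewrite -!in_algE => /fmorph_inj. Qed.

Lemma hB1 (k : K) (u1 u2 v : F) : Bf (k *: u1 + u2) v = k * Bf u1 v + Bf u2 v.
Proof.
apply: alg_inj => /=; rewrite -!in_algE rmorphD rmorphM /= ?in_algE !BfE.
by rewrite /sigmaL mulrDl Tr_add -Tr_scal mulrA mulr_algl.
Qed.

Lemma hB2 (k : K) (u v1 v2 : F) : Bf u (k *: v1 + v2) = k ^+ q * Bf u v1 + Bf u v2.
Proof.
apply: alg_inj => /=; rewrite -!in_algE rmorphD rmorphM rmorphXn /= ?in_algE !BfE.
have ee : (k *: v1 + v2) ^+ q = (k ^+ q)%:A * v1 ^+ q + v2 ^+ q.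
  by have := frobDF (k *: v1) v2 1; rewrite expn1 => ->; rewrite mulr_algl exprZn.
by rewrite /sigmaL ee L_add L_scal mulrDr Tr_add mulrCA Tr_scal algX.
Qed.

Lemma hHB (u v : F) : Bf v u ^+ q = lam * Bf u v.
Proof.
apply: alg_inj => /=; rewrite -!in_algE rmorphM rmorphXn /= ?in_algE !BfE.
exact: hH.
Qed.

Lemma hFK (x y : K) : (x + y) ^+ q = x ^+ q + y ^+ q.
Proof. by have := frobDK x y 1; rewrite expn1. Qed.

Local Notation V := (finvect_type F).

Lemma Tr0 : Tr q n (0 : F) = 0.
Proof. by rewrite /Tr big1 // => i _; rewrite frob0F. Qed.

Lemma Tr_nz : exists z : F, Tr q n z != 0.
Proof.
case: (boolP [exists z : V, Tr q n z != 0]) => [/existsP [z hz]|/existsPn hall].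
  by exists z.
exfalso.
pose P : {poly F} := \sum_(i < n) 'X^(q ^ (2 * i)).
have hn1 : (n.-1 < n)%N by lia.
pose i0 : 'I_n := Ordinal hn1.
have hq := q_gt1.
have P0 : P != 0.
  apply/eqP => P0; have := congr1 (fun P : {poly F} => P`_(q ^ (2 * n.-1))) P0.
  rewrite /= coef_sum coef0 (bigD1 i0) //= coefXn eqxx big1 ?addr0.
    by move/eqP; rewrite oner_eq0.
  move=> i hi; rewrite coefXn.
  case: eqP => // /(expnI hq) h.
  have ii : i = i0 by apply: val_inj => /=; lia.
  by rewrite ii eqxx in hi.
have roots : all (root P) (enum V).
  apply/allP => x _; rewrite rootE horner_sum.
  have := hall x; rewrite negbK => /eqP hx.
  by apply/eqP; rewrite -[RHS]hx /Tr; apply: eq_bigr => i _; rewrite hornerXn.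
have := max_poly_roots P0 roots (enum_uniq _).
rewrite (_ : size (enum V) = #|V|); last by rewrite cardE.
rewrite cardV.
have hs : (size P <= (q ^ (2 * n.-1)).+1)%N.
  apply: leq_trans (size_sum _ _ _) _.
  apply/bigmax_leqP => i _; rewrite size_polyXn ltnS leq_exp2l //.
  by have := ltn_ord i; lia.
move=> hlt; have := leq_trans hlt hs.
have -> : ((q ^ 2) ^ n = q ^ 2 * q ^ (2 * n.-1))%N.
  by rewrite -expnM -expnD; congr (_ ^ _)%N; lia.
have hX : (0 < q ^ (2 * n.-1))%N by rewrite expn_gt0; lia.
move: hX; move: (q ^ (2 * n.-1))%N => X hX.
rewrite expnS expn1; nia.
Qed.

Lemma Rad_eq : @Rad K V Bf (setT : {set V}) = [set v : V | Lpoly q a (v ^+ q) == 0].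
Proof.
apply/setP => v; rewrite !inE; apply/forall_inP/eqP.
  move=> h; apply/eqP; apply: contraT => y0.
  have [z hz] := Tr_nz.
  have := h (z / Lpoly q a (v ^+ q)) (in_setT _).
  move/eqP => hb; have := BfE (z / Lpoly q a (v ^+ q)) v.
  by rewrite hb scale0r /sigmaL divfK // => /esym/eqP; rewrite (negbTE hz).
move=> h u _; apply/eqP/alg_inj => /=.
by rewrite BfE /sigmaL h mulr0 Tr0 scale0r.
Qed.

Lemma frob_inj : injective (fun v : V => v ^+ q).
Proof.
move=> x y /= hxy; apply/eqP; rewrite -subr_eq0.
have := frobDF x (- y) 1; rewrite frobNF !expn1 hxy subrr => /eqP.
by rewrite expf_eq0 => /andP[_].
Qed.

Lemma Lf_add : zmod_morphism (Lpoly q a).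
Proof.
move=> x y; rewrite L_add; congr (_ + _).
rewrite /Lpoly -sumrN; apply: eq_bigr => i _.
by rewrite frobNF mulrN.
Qed.

Lemma Lf_scal : scalable (Lpoly q a).
Proof. by move=> k x; rewrite -mulr_algl L_scal mulr_algl. Qed.

Lemma lfunL (y : F) : linfun (Lpoly q a) y = Lpoly q a y.
Proof.
pose faM := GRing.isZmodMorphism.Build _ _ _ Lf_add.
pose flM := GRing.isScalable.Build _ _ _ _ _ Lf_scal.
pose Lf : {linear F -> F} := HB.pack (Lpoly q a) faM flM.
exact: (lfunE Lf y).
Qed.

Lemma card_ker :
  #|[set v : V | Lpoly q a (v ^+ q) == 0]| = ((q ^ 2) ^ (\dim (kerL q a)))%N.
Proof.
have := card_vspace (kerL q a : {vspace V}); rewrite hK => <-.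
rewrite -(card_imset _ frob_inj).
apply: eq_card => y.
rewrite /kerL memv_ker lfunL.
apply/imsetP/idP.
  by case=> v; rewrite inE => hv ->.
move=> hy; exists (y ^+ (q ^ (2 * n).-1)); last first.
  rewrite -exprM -expnSr prednK; last by lia.
  by rewrite expnM fixF.
rewrite inE -exprM -expnSr prednK; last by lia.
by rewrite expnM fixF.
Qed.

Lemma Ncount_eq (c : K) : Ncount q a c = @Nc K V Bf (setT : {set V}) (- c).
Proof.
rewrite /Ncount /Nc; apply: eq_card => u; rewrite !inE.
rewrite -[Tr _ _ _]/(sigmaL q a u u) -BfE -!in_algE -rmorphD fmorph_eq0.
by rewrite addr_eq0.
Qed.

Lemma closedT : closedS (setT : {set V}).
Proof. by split; [exact: in_setT | move=> *; rewrite in_setT]. Qed.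

Lemma main (c : K) :
  let r := (n - \dim (kerL q a))%N in
  (Ncount q a c)%:Z =
    (if c == 0 then
       (q ^ (2 * n - 1))%:Z + (-1) ^+ r * (q - 1)%:Z * (q ^ (2 * n - r - 1))%:Z
     else if c ^+ (q - 1) == lam then
       (q ^ (2 * n - 1))%:Z + (-1) ^+ r.+1 * (q ^ (2 * n - r - 1))%:Z
     else 0).
Proof.
move=> r.
have hq := q_gt1.
have hc1 : #|(setT : {set V})| = ((q ^ 2) ^ n)%N by rewrite cardsT cardV.
have hr1 : #|@Rad K V Bf setT| = ((q ^ 2) ^ (\dim (kerL q a)))%N by rewrite Rad_eq card_ker.
have hA := @partA K V q lam Bf hq hK hFK hB1 hB2 hHB n setT (\dim (kerL q a))
  closedT hc1 hr1 (- c).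
rewrite -Ncount_eq /Gf oppr_eq0 -/r in hA.
have qz : q%:Z != 0 by rewrite eqz_nat; lia.
have E1 : (q ^ (2 * n) = q * q ^ (2 * n - 1))%N by rewrite -expnS; congr (_ ^ _)%N; lia.
have E2 : (q ^ (2 * n - r) = q * q ^ (2 * n - r - 1))%N.
  by rewrite -expnS; congr (_ ^ _)%N; rewrite /r; lia.
case: (eqVneq c 0) => [c0 | c0].
  rewrite c0 eqxx in hA *.
  apply: (mulfI qz); rewrite -PoszM hA E1 E2.
  move: (q ^ (2 * n - 1))%N (q ^ (2 * n - r - 1))%N => X Y.
  rewrite !PoszM.
  move: ((-1) ^+ r : int) (Posz (q - 1)) (Posz q) => s1 s2 s3.
  ring.
have hc' : ((- c) ^+ q == lam * - c) = (c ^+ (q - 1) == lam).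
  have := exprNn_pchar c (natq 1 pcharK); rewrite expn1 => ->.
  rewrite mulrN eqr_opp.
  have hq' : q = (q - 1).+1 by lia.
  rewrite {1}hq' exprSr; apply/eqP/eqP => [h|->]; [exact: (mulIf c0 h) | done].
rewrite (negbTE c0) hc' in hA *.
case: (c ^+ (q - 1) == lam) in hA *.
  apply: (mulfI qz); rewrite -PoszM hA E1 E2 exprS.
  move: (q ^ (2 * n - 1))%N (q ^ (2 * n - r - 1))%N => X Y.
  rewrite !PoszM.
  move: ((-1) ^+ r : int) (Posz (q - 1)) (Posz q) => s1 s2 s3.
  ring.
by apply: (mulfI qz); rewrite -PoszM hA mulr0.
Qed.

End PartB.


Unset Implicit Arguments.
Set Strict Implicit.

Theorem corollary4p2 (p e q n : nat) (K : finFieldType) (F : fieldExtType K)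
    (a : 'I_n -> F) (lam : K) (c : K) :
  prime p -> (0 < e)%N -> q = (p ^ e)%N -> #|K| = (q ^ 2)%N ->
  (0 < n)%N -> \dim {:F} = n ->
  is_lambda_hermitian q a lam ->
  let r := (n - \dim (kerL q a))%N in
  (Ncount q a c)%:Z =
    (if c == 0 then
       (q ^ (2 * n - 1))%:Z + (-1) ^+ r * (q - 1)%:Z * (q ^ (2 * n - r - 1))%:Z
     else if c ^+ (q - 1) == lam then
       (q ^ (2 * n - 1))%:Z + (-1) ^+ r.+1 * (q ^ (2 * n - r - 1))%:Z
     else 0).
Proof.
move=> hp he hqe hK hn hdim hH.
exact: (main hp he hqe hK hn hdim hH c).
Qed.
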